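(* Fix $1<p<\infty$. Fix natural numbers $l_1,\dots,l_{d+1}$, let $L=\prod_{i=1}^{d+1}l_i$ and let $T=\bigcup_{i=0}^{d+1}\Lambda_i$ be an $(l_1,\dots,l_{d+1})$ interval tree. Suppose $0<\Delta,\mu<1$, $0<\nu<1$, $\Theta>0$, $M>1$, $m\in\mathbb{N}$, $\lambda>0$, and $(s_I)_{I\in T}\subset(0,\infty)$ are such that (i) for each $I\in T\setminus\Lambda_{d+1}$, $s_I\le\sum_{J^-=I}s_J$; (ii) for all $0\le j\le d$, $\max_{I\in\Lambda_j}s_I\le M\min_{I\in\Lambda_j}s_I$; (iii) $s_{[L]}^p>(1-\nu/2)\frac{\Theta^p}{\lambda^p}\bigl(\prod_{i=1}^{d+1}l_i^{p-1}\bigr)\sum_{I\in\Lambda_{d+1}}s_I^p$; (iv) $(1-\mu\Delta/M^p)^m<(1-\nu/2)\frac{\Theta^p}{\lambda^p}$. For each $0\le j<d$ let $I_j=\{I\in\Lambda_j: s_I^p\le(1-\mu)l_{j+1}^{p-1}\sum_{J^-=I}s_J^p\}$ and let $B=\{j<d:|I_j|\ge\Delta|\Lambda_j|\}$. Then $|B|\le m$.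
   Context: $[n]=\{1,\dots,n\}$. Given natural numbers $l_1,\dots,l_{k}$ with $L=\prod_{j=1}^{k}l_j$, an $(l_1,\dots,l_k)$ interval tree $T=\bigcup_{i=0}^k\Lambda_i$ is built as follows: $\Lambda_0=\{[L]\}$; if $\Lambda_i$ ($i<k$) consists of pairwise disjoint integer subintervals of $[L]$ each of cardinality $\prod_{j=i+1}^k l_j$, then each $I\in\Lambda_i$ is partitioned into $l_{i+1}$ integer subintervals of equal cardinality, and $\Lambda_{i+1}$ is the set of all these subintervals over all $I\in\Lambda_i$. For $0<j\le k$ and $J\in\Lambda_j$, $J^-$ denotes the unique $I\in\Lambda_{j-1}$ with $J\subset I$; sums $\sum_{J^-=I}$ range over the children of $I$. *)

(* Defs.v *)
From HB Require Import structures.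
From mathcomp Require Import all_boot all_order all_algebra.
From mathcomp Require Import reals exp.
Set Implicit Arguments. Unset Strict Implicit. Unset Printing Implicit Defensive.
Import Order.TTheory GRing.Theory Num.Theory.

(* Interval tree for (l_1,...,l_{d+1}); l : nat -> nat, only l 1 .. l (d+1) used.
   Level i (0 <= i <= d+1) consists of cnt l i = l_1*...*l_i intervals,
   each of cardinality blk l d i = l_{i+1}*...*l_{d+1}.
   The a-th interval of level i (a < cnt l i) is the integer interval
   [a * blk + 1, (a+1) * blk] (intervals listed left to right).
   Its children are the intervals (i+1, a * l_{i+1} + b), b < l_{i+1}. *)
Definition blk (l : nat -> nat) (d i : nat) : nat := \prod_(i.+1 <= j < d.+2) l j.
Definition cnt (l : nat -> nat) (i : nat) : nat := \prod_(1 <= j < i.+1) l j.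

(* A family (s_I)_{I in T} is given as a function of the integer interval,
   an integer interval {lo,...,hi} being encoded by its endpoints (lo, hi).
   sv s l d i a = s_I for I the a-th interval of level i. *)
Definition sv {R : Type} (s : nat -> nat -> R) (l : nat -> nat) (d i a : nat) : R :=
  s (a * blk l d i).+1 (a.+1 * blk l d i).

(* Main.v *)
Require Import Defs.
From HB Require Import structures.
From mathcomp Require Import all_boot all_order all_algebra.
From mathcomp Require Import reals exp.
From mathcomp Require Import convex hoelder interval_inference.
From mathcomp Require Import ring lra.
Import Order.TTheory GRing.Theory Num.Theory.
Local Open Scope ring_scope.

Section Helpers.
Variable R : realType.

Lemma conv2 (p t x y : R) : 1 <= p -> 0 <= t -> t <= 1 -> 0 <= x -> 0 <= y ->
  (t * x + (1 - t) * y) `^ p <= t * x `^ p + (1 - t) * y `^ p.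
Proof.
move=> p1 t0 t1 x0 y0.
have := (convex_powR p1 (Itv01 t0 t1) (x:=x) (y:=y)).
rewrite !convRE /=. apply.
all: by rewrite classical_sets.in_setE /= in_itv /= andbT.
Qed.

Lemma pmean (p : R) (x : nat -> R) n : 1 <= p -> (forall i, (i <= n)%N -> 0 <= x i) ->
  ((\sum_(i < n.+1) x i) / n.+1%:R) `^ p <= (\sum_(i < n.+1) x i `^ p) / n.+1%:R.
Proof.
move=> p1; elim: n => [|n IH] x0.
  by rewrite !big_ord1 !divr1.
have {}IH := IH (fun i hi => x0 i (leqW hi)).
rewrite big_ord_recr [X in _ <= X / _]big_ord_recr /=.
set A := \sum_(i < n.+1) x i.
set B := \sum_(i < n.+1) x i `^ p.
set N := n.+1%:R : R.
have N0 : 0 < N by rewrite ltr0n.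
have h2 : n.+2%:R = N + 1 :> R by rewrite -natr1.
rewrite h2.
set t := N / (N + 1).
have t0 : 0 <= t by rewrite divr_ge0 // ?addr_ge0 // ltW.
have t1 : t <= 1 by rewrite ler_pdivrMr ?mul1r ?lerDl // addr_gt0.
have A0 : 0 <= A by rewrite sumr_ge0 // => i _; apply: x0; rewrite ltnW // ltn_ord.
have E : (A + x n.+1) / (N + 1) = t * (A / N) + (1 - t) * x n.+1.
  rewrite /t; field; apply/andP; split; rewrite gt_eqF //; lra.
rewrite E; apply: (le_trans (@conv2 p t (A / N) (x n.+1) p1 t0 t1 _ (x0 _ (leqnn _)))).
  by rewrite divr_ge0 // ltW.
apply: (@le_trans _ _ (t * (B / N) + (1 - t) * x n.+1 `^ p)).
  by rewrite lerD2r ler_wpM2l.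
rewrite le_eqVlt; apply/orP; left; apply/eqP.
rewrite /t; field; apply/andP; split; rewrite gt_eqF //; lra.
Qed.

Lemma pmean2 (p : R) (x : nat -> R) n : 1 <= p -> (forall i, (i < n)%N -> 0 <= x i) ->
  (\sum_(i < n) x i) `^ p <= n%:R `^ (p - 1) * \sum_(i < n) x i `^ p.
Proof.
move=> p1 x0; case: n x0 => [|n] x0.
  by rewrite !big_ord0 mulr0 powR0 // gt_eqF // (lt_le_trans ltr01).
have N0 : 0 < n.+1%:R :> R by rewrite ltr0n.
have -> : \sum_(i < n.+1) x i = n.+1%:R * ((\sum_(i < n.+1) x i) / n.+1%:R).
  by rewrite mulrC divfK // gt_eqF.
rewrite powRM; [| exact: ltW | by rewrite divr_ge0 ?sumr_ge0 // ?ltW // => i _; apply: x0].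
apply: (le_trans (ler_wpM2l (powR_ge0 _ _) (pmean p x n p1 x0))).
rewrite -(mulr_powRB1 (ltW N0)) ?(lt_le_trans ltr01) //.
rewrite le_eqVlt; apply/orP; left; apply/eqP; field; by rewrite gt_eqF.
Qed.

Lemma idx_lt a b c n : (a < c)%N -> (b < n)%N -> (a * n + b < c * n)%N.
Proof.
move=> ha hb; apply: (leq_trans _ (leq_mul ha (leqnn n))).
by rewrite mulSn addnC ltn_add2r.
Qed.

Lemma sum_reindex (f : nat -> R) k n :
  \sum_(a < k) \sum_(b < n) f (a * n + b)%N = \sum_(i < k * n) f i.
Proof.
elim: k => [|k IH]; first by rewrite big_ord0 mul0n big_ord0.
rewrite big_ord_recr /= IH mulSnr big_split_ord /=.
by congr (_ + _); apply: eq_bigr => i _.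
Qed.

End Helpers.

Theorem lemma3p5 (R : realType) (p : R) (d : nat) (l : nat -> nat)
  (Delta mu nu Theta M lam : R) (m : nat) (s : nat -> nat -> R) :
  1 < p ->
  (forall j, (1 <= j <= d.+1)%N -> (0 < l j)%N) ->
  0 < Delta < 1 -> 0 < mu < 1 -> 0 < nu < 1 -> 0 < Theta -> 1 < M -> 0 < lam ->
  (* s_I in (0, oo) for all I in T *)
  (forall i a, (i <= d.+1)%N -> (a < cnt l i)%N -> 0 < sv s l d i a) ->
  (* (i) *)
  (forall i a, (i <= d)%N -> (a < cnt l i)%N ->
     sv s l d i a <= \sum_(b < l i.+1) sv s l d i.+1 (a * l i.+1 + b)) ->
  (* (ii) max_{I in Lambda_j} s_I <= M min_{I in Lambda_j} s_I *)
  (forall j a b, (j <= d)%N -> (a < cnt l j)%N -> (b < cnt l j)%N ->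
     sv s l d j a <= M * sv s l d j b) ->
  (* (iii) *)
  sv s l d 0 0 `^ p >
    (1 - nu / 2) * (Theta `^ p / lam `^ p)
    * (\prod_(1 <= i < d.+2) (l i)%:R `^ (p - 1))
    * (\sum_(a < cnt l d.+1) sv s l d d.+1 a `^ p) ->
  (* (iv) *)
  (1 - mu * Delta / M `^ p) ^+ m < (1 - nu / 2) * (Theta `^ p / lam `^ p) ->
  (#|[set j : 'I_d |
      ((#|[set a : 'I_(cnt l j) |
          sv s l d j a `^ p <=
            (1 - mu) * (l j.+1)%:R `^ (p - 1)
            * \sum_(b < l j.+1) sv s l d j.+1 (a * l j.+1 + b) `^ p]|)%:R
      >= Delta * (cnt l j)%:R)%R]| <= m)%N.
Proof.
move=> p1 lpos /andP[D0 D1] /andP[mu0 mu1] /andP[nu0 nu1] Th0 M1 lam0 spos hi hii hiii hiv.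
have p0 : 0 <= p by rewrite ltW // (lt_trans ltr01).
have p1' : 1 <= p by rewrite ltW.
set g := sv s l d.
have cntS j : cnt l j.+1 = (cnt l j * l j.+1)%N by rewrite /cnt big_nat_recr.
have cnt0 : cnt l 0 = 1%N by rewrite /cnt big_geq.
have cnt_gt0 j : (j <= d.+1)%N -> (0 < cnt l j)%N.
  elim: j => [|j IH] jd; first by rewrite cnt0.
  by rewrite cntS muln_gt0 IH ?(ltnW jd) // lpos //= jd.
set r := 1 - mu * Delta / M `^ p.
have Mp1 : 1 <= M `^ p.
  by rewrite -(powRr0 M) ler_powR // ltW.
have Mp0 : 0 < M `^ p by apply: lt_le_trans Mp1.
have r1 : r <= 1.
  by rewrite /r gerBl divr_ge0 // ?mulr_ge0 // ltW.
have r0 : 0 <= r.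
  rewrite /r subr_ge0 ler_pdivrMr // mul1r; apply: le_trans Mp1.
  by rewrite mulr_ile1 // ltW.
pose Bp (j : nat) : bool := Delta * (cnt l j)%:R <=
  (#|[set a : 'I_(cnt l j) | g j a `^ p <=
      (1 - mu) * (l j.+1)%:R `^ (p - 1) * \sum_(b < l j.+1) g j.+1 (a * l j.+1 + b)%N `^ p]|)%:R.
have step j : (j <= d)%N -> \sum_(a < cnt l j) g j a `^ p <=
   r ^+ ((j < d)%N && Bp j) * ((l j.+1)%:R `^ (p - 1) * \sum_(a < cnt l j.+1) g j.+1 a `^ p).
  move=> jd.
  have n0 : (0 < l j.+1)%N by apply: lpos; rewrite /= ltnS jd.
  have c0 : (0 < cnt l j)%N by apply: cnt_gt0; rewrite leqW.
  set n := l j.+1 in n0 *.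
  have ES : \sum_(a < cnt l j.+1) g j.+1 a `^ p =
      \sum_(a < cnt l j) \sum_(b < n) g j.+1 (a * n + b)%N `^ p.
    by rewrite cntS; symmetry; exact: (sum_reindex _ (fun i => g j.+1 i `^ p)).
  rewrite ES.
  set c := cnt l j in c0 ES *.
  set C := fun a : nat => \sum_(b < n) g j.+1 (a * n + b)%N `^ p.
  have Ha : forall a : 'I_c, g j a `^ p <= n%:R `^ (p - 1) * C a.
    move=> a.
    have ha : (a < c)%N := ltn_ord a.
    apply: (le_trans _ (pmean2 _ p (fun b => g j.+1 (a * n + b)%N) n p1' _)).
      apply: ge0_ler_powR => //.
      - by rewrite nnegrE ltW // spos // ltnW // ltnS.
      - rewrite nnegrE sumr_ge0 // => b _; rewrite ltW // spos // cntS idx_lt //.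
      - exact: hi.
    by move=> b hb /=; rewrite ltW // spos // cntS idx_lt //.
  case Hb: ((j < d)%N && Bp j); last first.
    rewrite expr0 mul1r mulr_sumr; apply: ler_sum => a _; exact: Ha.
  move/andP: Hb => [jd' hB]; rewrite expr1.
  have jd1 : (j.+1 <= d.+1)%N := jd.
  set I := [set a : 'I_c | g j a `^ p <= (1 - mu) * n%:R `^ (p - 1) * C a].
  have hB' : Delta * c%:R <= #|I|%:R by exact: hB.
  set S := \sum_(a < c) C a.
  set T := \sum_(a < c | a \in I) C a.
  set q := n%:R `^ (p - 1).
  have q0 : 0 <= q := powR_ge0 _ _.
  have H1 : \sum_(a < c) g j a `^ p <= q * S - mu * q * T.
    rewrite /T /S [X in mu * q * X]big_mkcond /= !mulr_sumr -sumrB; apply: ler_sum => a _.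
    case: ifP => aI.
    - move: aI; rewrite inE => aI; apply: (le_trans aI).
      by rewrite le_eqVlt; apply/orP; left; apply/eqP; rewrite /q; ring.
    - by rewrite mulr0 subr0; exact: Ha.
  have gpos : forall i, (i < c * n)%N -> 0 <= g j.+1 i.
    by move=> i hi'; rewrite ltW // spos // ?cntS // ltnS ltnW.
  have S0 : 0 <= S by rewrite sumr_ge0 // => a _; rewrite sumr_ge0 // => b _; rewrite powR_ge0.
  have key : forall a : 'I_c, a \in I -> forall b : 'I_n,
      S <= (c * n)%:R * (M `^ p * g j.+1 (a * n + b)%N `^ p).
    move=> a aI b.
    have -> : S = \sum_(i < cnt l j.+1) g j.+1 i `^ p by rewrite ES.
    rewrite (_ : (c * n)%:R * _ = \sum_(i < cnt l j.+1) (M `^ p * g j.+1 (a * n + b)%N `^ p));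
      last by rewrite sumr_const card_ord cntS mulr_natl.
    apply: ler_sum => i _.
    have hab : (a * n + b < cnt l j.+1)%N by rewrite cntS idx_lt.
    have gi := spos _ _ jd1 (ltn_ord i).
    have ga := spos _ _ jd1 hab.
    have M0 : 0 <= M by rewrite ltW // (lt_trans ltr01).
    rewrite -powRM; [| exact: M0 | exact: ltW ga].
    apply: ge0_ler_powR => //.
    - by rewrite nnegrE ltW.
    - by rewrite nnegrE mulr_ge0 // ltW.
    - by apply: hii.
  have H3 : \sum_(a < c | a \in I) \sum_(b < n) S <=
      \sum_(a < c | a \in I) \sum_(b < n) (c * n)%:R * (M `^ p * g j.+1 (a * n + b)%N `^ p).
    by apply: ler_sum => a aI; apply: ler_sum => b _; exact: key.
  have E2 : \sum_(a < c | a \in I) \sum_(b < n) (c * n)%:R * (M `^ p * g j.+1 (a * n + b)%N `^ p)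
      = (c * n)%:R * (M `^ p * T).
    by rewrite /T !mulr_sumr; apply: eq_bigr => a _; rewrite /C !mulr_sumr.
  rewrite E2 (eq_bigr (fun _ => S *+ n)) in H3; last by move=> a _; rewrite sumr_const card_ord.
  rewrite sumr_const -mulrnA -[S *+ _]mulr_natl in H3.
  have cn0 : 0 < (c * n)%:R :> R by rewrite ltr0n muln_gt0 c0 n0.
  have H2 : Delta * S <= M `^ p * T.
    rewrite -(ler_pM2l cn0).
    apply: (le_trans _ H3).
    have -> : (c * n)%:R * (Delta * S) = (Delta * c%:R) * (n%:R * S) :> R
      by rewrite natrM; ring.
    have -> : (n * #|I|)%:R * S = #|I|%:R * (n%:R * S) :> R by rewrite natrM; ring.
    by apply: ler_wpM2r => //; rewrite mulr_ge0.
  apply: (le_trans H1).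
  have -> : r * (q * S) = q * S - mu * q * (Delta * S / M `^ p) by rewrite /r; ring.
  rewrite lerD2l lerN2; apply: ler_wpM2l; first by rewrite mulr_ge0 // ltW.
  by rewrite ler_pdivrMr // [T * _]mulrC.
pose P k := \prod_(1 <= i < k.+1) (l i)%:R `^ (p - 1).
pose G k := P k * \sum_(a < cnt l k) g k a `^ p.
pose b (j : nat) : nat := ((j < d)%N && Bp j).
have P0 k : 0 <= P k by rewrite prodr_ge0 // => i _; rewrite powR_ge0.
have ind : forall k, (k <= d.+1)%N -> g 0 0 `^ p <= r ^+ (\sum_(j < k) b j) * G k.
  elim => [|k IH] hk.
    rewrite big_ord0 expr0 mul1r /G /P big_geq // mul1r cnt0 big_ord1 /=.
    exact: lexx.
  have hk' : (k <= d)%N := hk.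
  apply: (le_trans (IH (leqW hk'))).
  rewrite big_ord_recr /= exprD -mulrA; apply: ler_wpM2l; first exact: exprn_ge0.
  apply: (le_trans (ler_wpM2l (P0 k) (step k hk'))).
  have PS : P k.+1 = P k * (l k.+1)%:R `^ (p - 1) by rewrite /P big_nat_recr.
  rewrite /G PS mulrCA.
  by rewrite [P k * (_ * _)]mulrA.
have hind := ind d.+1 (leqnn _).
have bd : b (@ord_max d) = 0%N by rewrite /b /= ltnn.
rewrite big_ord_recr bd Monoid.mulm1 in hind.
have hN : #|[set j : 'I_d | Bp j]| = (\sum_(i < d) b (widen_ord (leqnSn d) i))%N.
  rewrite -sum1_card big_mkcond; apply: eq_bigr => i _.
  rewrite inE /b /= ltn_ord /=.
  by case: (Bp i).
have {}hind : g 0 0 `^ p <= r ^+ #|[set j : 'I_d | Bp j]| * G d.+1.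
  by rewrite hN; exact: hind.
change (#|[set j : 'I_d | Bp j]| <= m)%N.
set N := #|[set j : 'I_d | Bp j]| in hind *.
rewrite leqNgt; apply/negP => hlt.
have rN : r ^+ N <= r ^+ m := ler_wiXn2l r0 r1 (ltnW hlt).
have G0 : 0 <= G d.+1.
  by rewrite mulr_ge0 // sumr_ge0 // => a _; rewrite powR_ge0.
have : g 0 0 `^ p < g 0 0 `^ p.
  apply: (le_lt_trans hind).
  apply: (le_lt_trans (ler_wpM2r G0 rN)).
  apply: (le_lt_trans (ler_wpM2r G0 (ltW hiv))).
  by rewrite /G mulrA.
by rewrite ltxx.
Qed.
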